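(* Fix $T>0$ and $\Delta t>0$ with $n=T/\Delta t$ an integer. Let $\widetilde{\mathcal S}_{\Delta t}=\mathcal C_h\circ\mathcal B_h\circ\mathcal A_{\Delta t}\circ\mathcal B_h\circ\mathcal C_h$ ($h=\Delta t/2$) be the discrete split-encoder update with at-most-one-jump likelihood described in the context, and $\mathcal S_{\Delta t}$ the exact one-step filtering semigroup. Assume $L^1$-stability: there is $L\ge0$ such that $\|\mathcal S_{\Delta t}(q_1)-\mathcal S_{\Delta t}(q_2)\|_1\le(1+L\Delta t)\|q_1-q_2\|_1$ for all normalized densities $q_1,q_2$; and assume the intensity of observation jumps larger than $\varepsilon>0$ is uniformly bounded by $\Lambda_\varepsilon$, so that (as in the local error theorem) there are constants $C_1,C_2>0$ independent of $\Delta t$ with $\|\widetilde{\mathcal S}_{\Delta t}(q)-\mathcal S_{\Delta t}(q)\|_1\le C_1\Delta t^2+C_2(\Lambda_\varepsilon\Delta t)^2$ for every normalized density $q$. Then there exists $C_T>0$, independent of $\Delta t$, such that for every normalized density $q$, $$\|\widetilde{\mathcal S}^{\,n}_{\Delta t}(q)-\mathcal S^{\,n}_{\Delta t}(q)\|_1\le C_T(1+\Lambda_\varepsilon^2)\Delta t.$$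
   Context: Setting: a partially observed jump-diffusion $dX_t=\mu(t,X_t,\Theta_t)dt+\sigma(t,X_t,\Theta_t)dW^X_t+\int\gamma(t,z,X_{t^-},\Theta_t)\widetilde N^X(dt,dz)$, $d\Theta_t=a(t,\Theta_t)dt+b(t,\Theta_t)dW^\Theta_t+\int k(t,\Theta_{t^-},z)\widetilde N^\Theta(dt,dz)$ (Brownian motions $W^X,W^\Theta$, compensated Poisson measures with compensators $\nu^X(dz)dt,\nu^\Theta(dz)dt$); only $X$ is observed. $\mathcal S_{\Delta t}$ maps the normalized filter density (conditional law of $\Theta$ given the observation history) at $t_k$ to that at $t_k+\Delta t$ given the observed increment $\Delta X_k$. The discrete update on a latent grid $\{\theta_j\}$ with spacing $\Delta\theta$: $\mathcal A_{\Delta t}$ applies a nonnegative Markov transition kernel $K_{\Delta t}$ (discretizing the generator of $\Theta$) plus a zero-total-mass residual correction, clips negatives to zero and renormalizes; $\mathcal B_h$ multiplies by $\mathcal N(\Delta X_k;\mu_\phi h,\sigma_\phi^2h)$ and renormalizes; $\mathcal C_h$ multiplies by $e^{-\lambda_\phi h}\mathcal N(\Delta X_k;\mu_\phi h,\sigma_\phi^2 h)+he^{-\lambda_\phi h}\int\mathcal N(\Delta X_k;\mu_\phi h+\gamma_\phi(z),\sigma_\phi^2h)\nu^X(dz)$ and renormalizes, where $\mu_\phi,\sigma_\phi,\lambda_\phi,\gamma_\phi$ are given coefficient functions of $(t_k,X_{t_k},\beta_k,\theta_j)$ and $\mathcal N(x;m,v)$ is the Gaussian density. Powers $\mathcal S^n$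 denote $n$-fold composition. *)

(* Defs.v *)
From HB Require Import structures.
From mathcomp Require Import all_boot all_order all_algebra.
From mathcomp Require Import all_classical all_reals all_analysis.
Set Implicit Arguments. Unset Strict Implicit. Unset Printing Implicit Defensive.
Import Order.TTheory GRing.Theory Num.Theory.
Local Open Scope classical_set_scope.
Local Open Scope ring_scope.

Definition L1dist (R : realType) (d : measure_display) (X : measurableType d)
  (mu : {measure set X -> \bar R}) (f g : X -> R) : \bar R :=
  (\int[mu]_x (`|f x - g x|)%:E)%E.

Definition is_density (R : realType) (d : measure_display) (X : measurableType d)
  (mu : {measure set X -> \bar R}) (f : X -> R) : Prop :=
  [/\ measurable_fun setT f, (forall x, 0 <= f x) &
      (\int[mu]_x (f x)%:E = 1)%E].

(* Main.v *)
Require Import Defs.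
From HB Require Import structures.
From mathcomp Require Import all_boot all_order all_algebra.
From mathcomp Require Import all_classical all_reals all_analysis.
From mathcomp Require Import ring lra measurable_realfun.
Import Order.TTheory GRing.Theory Num.Theory.
Local Open Scope ring_scope.

Lemma L1_meas (R : realType) (d : measure_display) (X : measurableType d)
  (f g : X -> R) : measurable_fun setT f -> measurable_fun setT g ->
  measurable_fun setT (fun x => @EFin R (`|f x - g x|)).
Proof.
move=> mf mg.
apply/(measurable_realfun.measurable_EFinP setT (fun x => `|f x - g x|)).
apply: measurableT_comp; first exact: measurable_realfun.normr_measurable.
exact: measurable_realfun.measurable_funB.
Qed.

Lemma L1_tri (R : realType) (d : measure_display) (X : measurableType d)
  (mu : {measure set X -> \bar R}) (f g h : X -> R) :
  measurable_fun setT f -> measurable_fun setT g -> measurable_fun setT h ->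
  (L1dist mu f h <= L1dist mu f g + L1dist mu g h)%E.
Proof.
move=> mf mg mh; rewrite /L1dist -ge0_integralD //; last 2 first.
- exact: L1_meas.
- exact: L1_meas.
apply: ge0_le_integral => //.
- exact: L1_meas.
- apply: emeasurable_funD; exact: L1_meas.
move=> x _; rewrite lee_fin.
have -> : f x - h x = (f x - g x) + (g x - h x) by ring.
exact: ler_normD.
Qed.

Theorem corollary1 (R : realType) (d : measure_display) (X : measurableType d)
  (mu : {measure set X -> \bar R})
  (S St : R -> (X -> R) -> (X -> R))
  (T L C1 C2 Lam : R) :
  0 < T -> 0 <= L -> 0 < C1 -> 0 < C2 -> 0 <= Lam ->
  (forall dt q, 0 < dt -> is_density mu q -> is_density mu (S dt q)) ->
  (forall dt q, 0 < dt -> is_density mu q -> is_density mu (St dt q)) ->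
  (forall dt q1 q2, 0 < dt -> is_density mu q1 -> is_density mu q2 ->
     (L1dist mu (S dt q1) (S dt q2) <= (1 + L * dt)%:E * L1dist mu q1 q2)%E) ->
  (forall dt q, 0 < dt -> is_density mu q ->
     (L1dist mu (St dt q) (S dt q) <= (C1 * dt ^+ 2 + C2 * (Lam * dt) ^+ 2)%:E)%E) ->
  exists CT : R, 0 < CT /\
    forall (dt : R) (n : nat), 0 < dt -> n%:R * dt = T ->
    forall q, is_density mu q ->
      (L1dist mu (iter n (St dt) q) (iter n (S dt) q)
         <= (CT * (1 + Lam ^+ 2) * dt)%:E)%E.
Proof.
move=> T0 L0 C10 C20 Lam0 HS HSt Hstab Hloc.
exists (T * expR (L * T) * (C1 + C2)); split.
  by rewrite !mulr_gt0 ?expR_gt0 ?addr_gt0.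
move=> dt n dt0 ndt q qd.
set M := 1 + L * dt.
set a := C1 * dt ^+ 2 + C2 * (Lam * dt) ^+ 2.
have M1 : 1 <= M by rewrite /M lerDl; apply: mulr_ge0 => //; exact: ltW.
have a0 : 0 <= a by rewrite /a addr_ge0 // mulr_ge0 // ?sqr_ge0 ?ltW.
have dS : forall k, is_density mu (iter k (S dt) q).
  by elim=> [|k IH] //=; apply: HS.
have dSt : forall k, is_density mu (iter k (St dt) q).
  by elim=> [|k IH] //=; apply: HSt.
have key : forall k, (L1dist mu (iter k (St dt) q) (iter k (S dt) q)
                      <= (k%:R * M ^+ k * a)%:E)%E.
  elim=> [|k IH].
    rewrite /= mul0r mul0r /L1dist.
    under eq_integral do rewrite subrr normr0.
    by rewrite integral0.
  rewrite /=.
  have [m1 _ _] := dSt k; have [m2 _ _] := dS k.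
  have [m3 _ _] := HS dt _ dt0 (dSt k).
  have [m4 _ _] := HS dt _ dt0 (dS k).
  have [m5 _ _] := HSt dt _ dt0 (dSt k).
  apply: le_trans; first exact: (@L1_tri _ _ _ mu _ _ _ m5 m3 m4).
  apply: le_trans; first apply: leeD.
  - exact: Hloc.
  - apply: Hstab => //.
  apply: le_trans; first apply: leeD; [exact: lexx| |].
    apply: lee_pmul; [by rewrite lee_fin; nra| |exact: lexx|exact: IH].
    rewrite /L1dist; apply: integral_ge0 => x _; by rewrite lee_fin.
  rewrite -EFinM -EFinD lee_fin.
  have Mk : 1 <= M ^+ k.+1 by rewrite exprn_ege1.
  have : M * (k%:R * M ^+ k * a) = k%:R * M ^+ k.+1 * a by rewrite exprS; ring.
  move=> ->.
  have E : (k.+1)%:R * M ^+ k.+1 * a = k%:R * M ^+ k.+1 * a + M ^+ k.+1 * a.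
    by rewrite -natr1; ring.
  by rewrite -/a E addrC lerD2l ler_peMl.
apply: le_trans; first exact: key.
rewrite lee_fin.
have MnE : M ^+ n <= expR (L * T).
  rewrite -ndt (mulrC n%:R) mulrA expRM_natr.
  apply: lerXn2r; [rewrite nnegrE; lra | rewrite nnegrE; exact/ltW/expR_gt0 | ].
  exact: expR_ge1Dx.
have : n%:R * a = T * (C1 + C2 * Lam ^+ 2) * dt.
  by rewrite -ndt /a; ring.
have nn : 0 <= n%:R :> R by [].
have eT : 0 < expR (L * T) by exact: expR_gt0.
have Mn0 : 0 <= M ^+ n by rewrite exprn_ge0 // ; lra.
move=> na.
rewrite -mulrA (mulrC (M ^+ n)) mulrA na.
have h1 : 0 <= T * (C1 + C2 * Lam ^+ 2) * dt.
  apply: mulr_ge0; last exact: ltW.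
  apply: mulr_ge0; first exact: ltW.
  apply: addr_ge0; first exact: ltW.
  apply: mulr_ge0; [exact: ltW | exact: sqr_ge0].
apply: (le_trans (ler_wpM2l h1 MnE)).
have hl2 : 0 <= Lam ^+ 2 by exact: sqr_ge0.
set e := expR (L * T).
have hc : C1 + C2 * Lam ^+ 2 <= (C1 + C2) * (1 + Lam ^+ 2) by nra.
have P : 0 <= T * dt * e.
  apply: mulr_ge0; [apply: mulr_ge0; exact: ltW | exact: ltW].
have := ler_wpM2l P hc.
have -> : T * dt * e * (C1 + C2 * Lam ^+ 2) = T * (C1 + C2 * Lam ^+ 2) * dt * e by ring.
have -> : T * dt * e * ((C1 + C2) * (1 + Lam ^+ 2)) = T * e * (C1 + C2) * (1 + Lam ^+ 2) * dt by ring.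
done.
Qed.
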